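(* Let $\mathcal{M}_1,\mathcal{M}_2$ be real QMMs (all unitary and measurement matrices have real entries) with common alphabets $\Sigma,\Gamma$, state spaces of dimensions $n_1,n_2$, and initial density operators $\rho_1,\rho_2$. Let $N'=\frac12 n_1(n_1+1)+\frac12 n_2(n_2+1)-1$. Then $(\mathcal{M}_1,\rho_1)\sim(\mathcal{M}_2,\rho_2)\iff(\mathcal{M}_1,\rho_1)\sim^{N'}(\mathcal{M}_2,\rho_2)$, and for every $k\in\mathbb{N}$, $(\mathcal{M}_1,\rho_1)\sim_k(\mathcal{M}_2,\rho_2)\iff(\mathcal{M}_1,\rho_1)\sim_k^{N'}(\mathcal{M}_2,\rho_2)$.
   Context: A quantum Mealy machine (QMM) is a tuple $\mathcal{M}=(\Sigma,\Gamma,\mathcal{H},U,M)$ where $\Sigma,\Gamma$ are finite alphabets, $\mathcal{H}$ a finite-dimensional complex Hilbert space, $U=\{U_\sigma\}_{\sigma\in\Sigma}$ unitary operators on $\mathcal{H}$, $M=\{M_\gamma\}_{\gamma\in\Gamma}$ linear operators with $\sum_\gamma M_\gamma^\dagger M_\gamma=I$. For a word $a$, $|a|$ is its length, $a[l:r]=a[l]\cdots a[r]$ (empty if $l>r$), $U_a=U_{a[|a|]}\cdots U_{a[1]}$, $U_\epsilon=I$. A scheduler for $a\in\Sigma^*$ is a finite non-decreasing integer sequence $\mathcal{S}=(s_1\le\dots\le s_{|\mathcal{S}|})$ in $\{0,\dots,|a|\}$ (possibly empty). With $s_0=0$, $s_{|\mathcal{S}|+1}=|a|$, $a_i=a[s_{i-1}+1:s_i]$.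 For $b\in\Gamma^{|\mathcal{S}|}$, $V_{b|a,\mathcal{S}}=U_{a_{|\mathcal{S}|+1}}M_{b_{|\mathcal{S}|}}U_{a_{|\mathcal{S}|}}\cdots M_{b_1}U_{a_1}$ and $\Pr^{\mathcal{M}}_\rho(b|a,\mathcal{S})=\operatorname{tr}(V_{b|a,\mathcal{S}}\rho V_{b|a,\mathcal{S}}^\dagger)$. $(\mathcal{M}_1,\rho_1)\sim(\mathcal{M}_2,\rho_2)$ means $\Pr^{\mathcal{M}_1}_{\rho_1}(b|a,\mathcal{S})=\Pr^{\mathcal{M}_2}_{\rho_2}(b|a,\mathcal{S})$ for all $a\in\Sigma^*$, schedulers $\mathcal{S}$ for $a$, $b\in\Gamma^{|\mathcal{S}|}$; $\sim_k$ restricts to $|\mathcal{S}|\le k$; $\sim^m$ to $|a|+|\mathcal{S}|\le m$; $\sim^m_k$ to both. *)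

(* Defs.v *)
From HB Require Import structures.
From mathcomp Require Import all_boot all_order all_algebra.
Set Implicit Arguments. Unset Strict Implicit. Unset Printing Implicit Defensive.
Import Order.TTheory GRing.Theory Num.Theory.
Local Open Scope ring_scope.

Section QMM.
Variable C : numClosedFieldType.

Definition adjmx (m n : nat) (A : 'M[C]_(m, n)) : 'M[C]_(n, m) :=
  (map_mx Num.conj A)^T.

Record qmm (S G : finType) (n : nat) := QMM {
  qU : S -> 'M[C]_n ;
  qM : G -> 'M[C]_n }.

Definition is_unitary n (A : 'M[C]_n) : Prop := A *m adjmx A = 1%:M.

Definition is_qmm (S G : finType) n (Q : qmm S G n) : Prop :=
  (forall s, is_unitary (qU Q s)) /\
  \sum_(g : G) (adjmx (qM Q g) *m qM Q g) = 1%:M.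

Definition real_mx m n (A : 'M[C]_(m, n)) : Prop :=
  forall i j, A i j \is Num.real.

Definition is_real_qmm (S G : finType) n (Q : qmm S G n) : Prop :=
  is_qmm Q /\ (forall s, real_mx (qU Q s)) /\ (forall g, real_mx (qM Q g)).

Definition is_density n (rho : 'M[C]_n) : Prop :=
  adjmx rho = rho /\
  (forall v : 'cV[C]_n, 0 <= (adjmx v *m rho *m v) 0 0) /\
  \tr rho = 1.

(* U_a = U_{a[|a|]} ... U_{a[1]} *)
Definition Uword (S G : finType) n (Q : qmm S G n) (a : seq S) : 'M[C]_n :=
  foldr (fun s acc => acc *m qU Q s) 1%:M a.

Definition scheduler (S : finType) (a : seq S) (sch : seq nat) : Prop :=
  sorted leq sch /\ all (fun s => s <= size a)%N sch.

(* V_{b|a,sch}, built from the previous cut point prev *)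
Fixpoint Vop (S G : finType) n (Q : qmm S G n) (a : seq S)
    (prev : nat) (sch : seq nat) (b : seq G) : 'M[C]_n :=
  match sch, b with
  | s1 :: sch', b1 :: b' =>
      Vop Q a s1 sch' b' *m qM Q b1 *m Uword Q (drop prev (take s1 a))
  | _, _ => Uword Q (drop prev a)
  end.

Definition Vmx (S G : finType) n (Q : qmm S G n) (a : seq S) (sch : seq nat)
    (b : seq G) : 'M[C]_n := Vop Q a 0 sch b.

Definition Pr (S G : finType) n (Q : qmm S G n) (rho : 'M[C]_n)
    (a : seq S) (sch : seq nat) (b : seq G) : C :=
  \tr (Vmx Q a sch b *m rho *m adjmx (Vmx Q a sch b)).

Definition qmm_equiv_on (P : nat -> nat -> bool) (S G : finType) n1 n2
    (Q1 : qmm S G n1) (rho1 : 'M[C]_n1) (Q2 : qmm S G n2) (rho2 : 'M[C]_n2)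
    : Prop :=
  forall (a : seq S) (sch : seq nat) (b : seq G),
    scheduler a sch -> size b = size sch -> P (size a) (size sch) ->
    Pr Q1 rho1 a sch b = Pr Q2 rho2 a sch b.

Definition qmm_equiv S G n1 n2 Q1 rho1 Q2 rho2 :=
  @qmm_equiv_on (fun _ _ => true) S G n1 n2 Q1 rho1 Q2 rho2.
Definition qmm_equiv_k (k : nat) S G n1 n2 Q1 rho1 Q2 rho2 :=
  @qmm_equiv_on (fun _ s => s <= k)%N S G n1 n2 Q1 rho1 Q2 rho2.
Definition qmm_equiv_m (m : nat) S G n1 n2 Q1 rho1 Q2 rho2 :=
  @qmm_equiv_on (fun l s => l + s <= m)%N S G n1 n2 Q1 rho1 Q2 rho2.
Definition qmm_equiv_mk (m k : nat) S G n1 n2 Q1 rho1 Q2 rho2 :=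
  @qmm_equiv_on (fun l s => (s <= k) && (l + s <= m))%N S G n1 n2 Q1 rho1 Q2 rho2.

End QMM.

(* Main.v *)
Require Import Defs.
From HB Require Import structures.
From mathcomp Require Import all_boot all_order all_algebra.
From mathcomp Require Import zify ring.
Set Implicit Arguments. Unset Strict Implicit. Unset Printing Implicit Defensive.
Import Order.TTheory GRing.Theory Num.Theory.
Local Open Scope ring_scope.

Section Chain.
Variables (F : fieldType) (D : nat) (X : finType) (T : X -> 'M[F]_D)
  (isM : pred X) (v0 : 'rV[F]_D).

Definition vecw (w : seq X) : 'rV[F]_D := foldr (fun x acc => acc *m T x) v0 w.

Fixpoint Fsp (l r : nat) : 'M[F]_D :=
  match l with
  | 0 => <<v0>>%MS
  | l'.+1 => (<<v0>> + (\sum_(x | ~~ isM x) (Fsp l' r *m T x)) +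
      (if r is r'.+1 then \sum_(x | isM x) (Fsp l' r' *m T x) else 0))%MS
  end.

Lemma v0_sub l r : (v0 <= Fsp l r)%MS.
Proof.
case: l => [|l] /=; first by rewrite genmxE.
apply: submx_trans (addsmxSl _ _); apply: submx_trans (addsmxSl _ _).
by rewrite genmxE.
Qed.

Lemma Fsp_monoS l r : (Fsp l r <= Fsp l.+1 r)%MS.
Proof.
elim: l r => [|l IH] r.
  by rewrite /= -addsmxA addsmxSl.
rewrite [Fsp l.+2 r]/=; rewrite [Fsp l.+1 r]/=.
apply: addsmxS; first apply: addsmxS => //.
  by apply: sumsmxS => x _; apply: submxMr.
by case: r => [|r] //; apply: sumsmxS => x _; apply: submxMr.
Qed.

Lemma Fsp_monoR l r : (Fsp l r <= Fsp l r.+1)%MS.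
Proof.
elim: l r => [|l IH] r //=.
apply: addsmxS; first apply: addsmxS => //.
  by apply: sumsmxS => x _; apply: submxMr.
by case: r => [|r]; [rewrite sub0mx | apply: sumsmxS => x _; apply: submxMr].
Qed.

Lemma Fsp_mono l l' r r' : (l <= l')%N -> (r <= r')%N ->
  (Fsp l r <= Fsp l' r')%MS.
Proof.
move=> hl hr.
apply: submx_trans (_ : Fsp l' r <= _)%MS.
  exact: (@homo_leq _ (fun l => Fsp l r) (fun A B => A <= B)%MS
      (@submx_refl _ _ _) (fun _ _ _ => @submx_trans _ _ _ _ _ _ _ _)
      (fun i => Fsp_monoS i r)).
exact: (@homo_leq _ (fun r => Fsp l' r) (fun A B => A <= B)%MS
      (@submx_refl _ _ _) (fun _ _ _ => @submx_trans _ _ _ _ _ _ _ _)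
      (fun i => Fsp_monoR l' i)).
Qed.

Lemma vec_sub w l r : (size w <= l)%N -> (count isM w <= r)%N ->
  (vecw w <= Fsp l r)%MS.
Proof.
elim: w l r => [|x w IH] l r; first by move=> _ _; exact: v0_sub.
case: l => [|l] //= hl.
case hx: (isM x) => /= hc.
  case: r hc => [|r] // hc.
  apply: submx_trans (addsmxSr _ _).
  apply: (sumsmx_sup x) => //; apply: submxMr; exact: IH.
apply: submx_trans (addsmxSl _ _); apply: submx_trans (addsmxSr _ _).
apply: (sumsmx_sup x); first by rewrite hx.
by apply: submxMr; apply: IH.
Qed.

Lemma Fsp_ker l r (d : 'cV[F]_D) :
  (forall w, (size w <= l)%N -> (count isM w <= r)%N -> vecw w *m d = 0) ->
  (Fsp l r <= kermx d)%MS.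
Proof.
elim: l r d => [|l IH] r d H /=.
  by rewrite genmxE sub_kermx; apply/eqP; apply: (H [::]).
rewrite !addsmx_sub; apply/andP; split; first (apply/andP; split).
- by rewrite genmxE sub_kermx; apply/eqP; apply: (H [::]).
- apply/sumsmx_subP => x hx; rewrite sub_kermx -mulmxA -sub_kermx.
  apply: IH => w hw hc; rewrite mulmxA.
  by apply: (H (x :: w)) => //=; rewrite (negbTE hx).
- case: r H => [|r] H; first by rewrite sub0mx.
  apply/sumsmx_subP => x hx; rewrite sub_kermx -mulmxA -sub_kermx.
  apply: IH => w hw hc; rewrite mulmxA.
  by apply: (H (x :: w)) => //=; rewrite hx.
Qed.

Definition stab r s := forall l, (s <= l)%N -> (Fsp l r <= Fsp s r)%MS.

Lemma stag r s0 l : (forall r', r = r'.+1 -> stab r' s0) -> (s0 <= l)%N ->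
  (Fsp l.+1 r <= Fsp l r)%MS -> stab r l.
Proof.
move=> Hs hl Hst.
have H : forall j, (Fsp (l + j) r <= Fsp l r)%MS.
  elim=> [|j IH]; first by rewrite addn0.
  apply: submx_trans Hst; rewrite addnS /=.
  apply: addsmxS; first apply: addsmxS => //.
    by apply: sumsmxS => x _; apply: submxMr.
  case: r Hs IH => [|r] Hs IH //.
  apply: sumsmxS => x _; apply: submxMr.
  apply: submx_trans (Hs r erefl (l + j) _) _; first by rewrite (leq_trans hl) ?leq_addr.
  exact: Fsp_mono.
by move=> l' hl'; rewrite -(subnKC hl').
Qed.

Lemma grow r s0 : (forall r', r = r'.+1 -> stab r' s0) ->
  exists s, [/\ stab r s, (s0 <= s)%N & (\rank (Fsp s0 r) + (s - s0) <= \rank (Fsp s r))%N].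
Proof.
move=> Hs.
have H : forall m, (exists s, [/\ stab r s, (s0 <= s)%N &
     (\rank (Fsp s0 r) + (s - s0) <= \rank (Fsp s r))%N]) \/
    (\rank (Fsp s0 r) + m <= \rank (Fsp (s0 + m) r))%N.
  elim=> [|m [IH|IH]]; first by right; rewrite !addn0.
  - by left.
  case: (boolP (Fsp (s0 + m).+1 r <= Fsp (s0 + m) r)%MS) => hst.
    left; exists (s0 + m); split; first exact: (stag Hs (leq_addr _ _) hst).
      exact: leq_addr.
    by rewrite addKn.
  right; rewrite addnS.
  have : (Fsp (s0 + m) r < Fsp (s0 + m).+1 r)%MS by rewrite ltmxE Fsp_monoS hst.
  rewrite ltmxErank => /andP [_ hlt].
  by rewrite addnS; apply: leq_trans hlt.
case: (H D.+1) => // hc; exfalso.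
move: (leq_trans hc (rank_leq_col _)); rewrite addnS ltnNge leq_addl //.
Qed.

Lemma exists_stab r : exists s, stab r s /\ (s + \rank v0 <= \rank (Fsp s r))%N.
Proof.
elim: r => [|r IHr].
  have [s [Hs Hle Hr]] := @grow 0 0 (fun r' (e : 0%N = r'.+1) => False_ind _ (O_S _ e)).
  exists s; split => //; move: Hr; rewrite /= genmxE subn0; lia.
have [s0 [Hs0 Hr0]] : exists s0, (forall r', r.+1 = r'.+1 -> stab r' s0) /\
    (s0 + \rank v0 <= \rank (Fsp s0 r.+1))%N.
  have [s [Hs Hr]] := IHr.
  exists s; split; first by move=> r' [<-].
  exact: leq_trans Hr (mxrankS (Fsp_monoR _ _)).
have [s [Hs Hle Hr]] := grow Hs0.
exists s; split => //.
apply: leq_trans Hr; move: Hr0; rewrite -(subnKC Hle) -addnA (addnC (s - s0)%N) addnA.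
by rewrite addKn leq_add2r.
Qed.

Lemma key k (c : 'cV[F]_D) :
  (forall w, (size w <= D.-1)%N -> (count isM w <= k)%N -> vecw w *m c = 0) ->
  forall w, (count isM w <= k)%N -> vecw w *m c = 0.
Proof.
move=> H w hw.
case: (eqVneq v0 0) => [v00|v0n].
  suff -> : vecw w = 0 by rewrite mul0mx.
  by elim: w {hw} => [|x w IH] //=; rewrite IH mul0mx.
have [s [Hs Hr]] := exists_stab k.
have hs : (s <= D.-1)%N.
  have h1 : (0 < \rank v0)%N by rewrite lt0n mxrank_eq0.
  have := leq_trans Hr (rank_leq_col _).
  move: h1; generalize (\rank v0); move=> rv h1 h2.
  rewrite -subn1; lia.
apply/eqP; rewrite -sub_kermx.
apply: submx_trans (Fsp_ker H).
apply: submx_trans (vec_sub (leqnn _) hw) _.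
apply: submx_trans (Fsp_mono (leq_maxl _ s) (leqnn k)) _.
apply: submx_trans (Hs _ (leq_maxr _ _)) _.
exact: Fsp_mono.
Qed.
End Chain.

Definition Tn (n : nat) := {k : 'I_n & 'I_k.+1}.

Lemma sum_tri n : (\sum_(i < n) i.+1 = (n * n.+1) %/ 2)%N.
Proof.
suff H : (2 * \sum_(i < n) i.+1 = n * n.+1)%N by rewrite -H mulKn.
elim: n => [|n IH]; first by rewrite big_ord0.
rewrite big_ord_recr /= mulnDr IH; lia.
Qed.

Lemma card_Tn n : #|{: Tn n}| = ((n * n.+1) %/ 2)%N.
Proof.
rewrite card_tagged -sum_tri -big_enum /= sumnE big_map.
by apply: eq_bigr => i _; rewrite card_ord.
Qed.

Section Enc.
Variables (R : pzRingType) (n : nat).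

Definition enc (Y : 'M[R]_n) : 'rV[R]_#|{: Tn n}| :=
  \row_t (let p := enum_val t in
          Y (tag p) (widen_ord (ltn_ord (tag p)) (tagged p))).

Definition pidx (i j : 'I_n) : Tn n :=
  Tagged (fun k : 'I_n => 'I_k.+1) (@inord (if (i <= j)%N then j else i) (minn i j)).

Definition dec (v : 'rV[R]_#|{: Tn n}|) : 'M[R]_n :=
  \matrix_(i, j) v 0 (enum_rank (pidx i j)).

Lemma decK Y : Y^T = Y -> dec (enc Y) = Y.
Proof.
move=> hY; apply/matrixP => i j; rewrite !mxE enum_rankK /=.
have hm : (minn i j <= (if (i <= j)%N then j else i))%N.
  by case: (leqP i j) => h //; exact: ltnW.
have E : widen_ord (ltn_ord (if (i <= j)%N then j else i))
   (@inord (if (i <= j)%N then j else i) (minn i j)) = if (i <= j)%N then i else j.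
  by apply: val_inj => /=; rewrite inordK ?ltnS //; case: (leqP i j).
rewrite E; case: (leqP i j) => h //.
by rewrite -[in RHS]hY mxE.
Qed.

Lemma encD a (u v : 'M[R]_n) : enc (a *: u + v) = a *: enc u + enc v.
Proof. apply/matrixP => i j; rewrite !mxE /=. set p := enum_val j. set k := widen_ord _ _. by rewrite !mxE. Qed.

Lemma decD a u v : dec (a *: u + v) = a *: dec u + dec v.
Proof. by apply/matrixP => i j; rewrite !mxE. Qed.
End Enc.

Section LinEx.
Variables (R : pzRingType) (m k : nat) (f : 'rV[R]_m -> 'rV[R]_k).
Hypothesis flin : forall a u v, f (a *: u + v) = a *: f u + f v.

Lemma linmx_ex : exists T : 'M[R]_(m, k), forall u, u *m T = f u.
Proof.
have fl : linear f by move=> a u v; exact: flin.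
pose g : {linear 'rV[R]_m -> 'rV[R]_k} := HB.pack f (GRing.isLinear.Build _ _ _ _ f fl).
by exists (lin1_mx g) => u; rewrite mul_rV_lin1.
Qed.
End LinEx.

Section Words.
Variables (C : numClosedFieldType) (S G : finType).

Definition isMx (x : (S + G)%type) : bool := if x is inr _ then true else false.

Definition opmx n (Q : qmm C S G n) (x : (S + G)%type) : 'M[C]_n :=
  match x with inl s => qU Q s | inr g => qM Q g end.

Definition Vw n (Q : qmm C S G n) (w : seq (S + G)%type) : 'M[C]_n :=
  foldr (fun x acc => acc *m opmx Q x) 1%:M w.

Lemma foldr_V n (Q : qmm C S G n) (z : 'M_n) w :
  foldr (fun x acc => acc *m opmx Q x) z w = z *m Vw Q w.
Proof. by elim: w => [|x w IH] /=; [rewrite mulmx1 | rewrite IH mulmxA]. Qed.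

Lemma Vw_cat n (Q : qmm C S G n) u v : Vw Q (u ++ v) = Vw Q v *m Vw Q u.
Proof. by rewrite /Vw foldr_cat foldr_V. Qed.

Lemma Vw_map n (Q : qmm C S G n) l : Vw Q (map inl l) = Uword Q l.
Proof. by elim: l => //= s l ->. Qed.

Fixpoint wop (a : seq S) (p : nat) (sch : seq nat) (b : seq G) : seq (S + G)%type :=
  match sch, b with
  | s1 :: sch', b1 :: b' => map inl (drop p (take s1 a)) ++ inr b1 :: wop a s1 sch' b'
  | _, _ => map inl (drop p a)
  end.

Lemma Vop_wop n (Q : qmm C S G n) a p sch b : Vop Q a p sch b = Vw Q (wop a p sch b).
Proof.
elim: sch p b => [|s1 sch IH] p [|b1 b] /=; rewrite ?Vw_map //.
by rewrite Vw_cat Vw_map /= IH.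
Qed.

Lemma count_wop a p sch b : (count isMx (wop a p sch b) <= size sch)%N.
Proof.
have h0 l : count isMx (map inl l) = 0%N.
  by rewrite count_map (@eq_count _ _ pred0) ?count_pred0.
elim: sch p b => [|s1 sch IH] p [|b1 b] /=; rewrite ?h0 //.
by rewrite count_cat h0 /= add1n ltnS.
Qed.

Fixpoint splitw (w : seq (S + G)%type) : seq S * seq nat * seq G :=
  match w with
  | [::] => ([::], [::], [::])
  | inl s :: w' => let: (a, sch, b) := splitw w' in (s :: a, map succn sch, b)
  | inr g :: w' => let: (a, sch, b) := splitw w' in (a, 0%N :: sch, g :: b)
  end.

Lemma Vop_shift n (Q : qmm C S G n) s a p sch b :
  Vop Q (s :: a) p.+1 (map succn sch) b = Vop Q a p sch b.
Proof. by elim: sch p b => [|s1 sch IH] p [|b1 b] //=; rewrite IH. Qed.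

Lemma Vop_cons0 n (Q : qmm C S G n) s a sch b :
  Vop Q (s :: a) 0 (map succn sch) b = Vop Q a 0 sch b *m qU Q s.
Proof.
case: sch b => [|s1 sch] [|b1 b] //=; rewrite ?drop0 //.
by rewrite Vop_shift !mulmxA.
Qed.

Lemma split_V n (Q : qmm C S G n) w :
  let: (a, sch, b) := splitw w in Vw Q w = Vop Q a 0 sch b.
Proof.
elim: w => [|[s|g] w IH] //=; case: (splitw w) IH => [[a sch] b] IH /=.
  by rewrite Vop_cons0 IH.
by rewrite take0 /= mulmx1 IH.
Qed.

Lemma split_props w :
  let: (a, sch, b) := splitw w in
  [/\ scheduler a sch, size b = size sch, size sch = count isMx w &
      (size a + size sch = size w)%N].
Proof.
elim: w => [|[s|g] w IH] //=; case: (splitw w) IH => [[a sch] b] [[hs ha] hb hc hsz] /=.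
  rewrite size_map; split => //; last by rewrite -hsz addSn.
  split; first by rewrite sorted_map.
  by rewrite all_map; apply: sub_all ha => x /=.
split => //=; [|by rewrite hb|by rewrite hc|by rewrite addnS hsz].
split => /=; last by [].

by case: sch hs {hb hc hsz ha} => //= x sch ->; rewrite andbT.
Qed.

Definition real_mxP m n (A : 'M[C]_(m, n)) := forall i j, A i j \is Num.real.

Lemma real_mul m n p (A : 'M[C]_(m, n)) (B : 'M[C]_(n, p)) :
  real_mx A -> real_mx B -> real_mx (A *m B).
Proof.
move=> hA hB i j; rewrite mxE; apply: rpred_sum => k _; exact: rpredM.
Qed.

Lemma real_Vw n (Q : qmm C S G n) w : is_real_qmm Q -> real_mx (Vw Q w).
Proof.
move=> [_ [hU hM]]; elim: w => [|x w IH] /=.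
  by move=> i j; rewrite mxE rpredMn ?real1.
by apply: real_mul => //; case: x.
Qed.

Lemma adj_real m n (A : 'M[C]_(m, n)) : real_mx A -> adjmx A = A^T.
Proof.
move=> hA; rewrite /adjmx; congr trmx; apply/matrixP => i j.
by rewrite mxE conj_Creal.
Qed.

Lemma Pr_Y n (Q : qmm C S G n) rho a sch b w : is_real_qmm Q ->
  Vmx Q a sch b = Vw Q w ->
  Pr Q rho a sch b = \tr ((Vw Q w)^T *m Vw Q w *m rho).
Proof.
move=> hQ hV; rewrite /Pr hV adj_real; last exact: real_Vw.
by rewrite mxtrace_mulC mulmxA.
Qed.
End Words.

Definition linmx (R : pzRingType) m k (f : 'rV[R]_m -> 'rV[R]_k) (fl : linear f) : 'M[R]_(m, k) :=
  let g : {linear 'rV[R]_m -> 'rV[R]_k} :=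
    HB.pack f (GRing.isLinear.Build _ _ _ _ f fl) in lin1_mx g.

Lemma linmxE (R : pzRingType) m k (f : 'rV[R]_m -> 'rV[R]_k) (fl : linear f) u :
  u *m linmx fl = f u.
Proof. by rewrite /linmx mul_rV_lin1. Qed.

Section Vec.
Variables (C : numClosedFieldType) (S G : finType) (n1 n2 : nat)
  (Q1 : qmm C S G n1) (Q2 : qmm C S G n2) (rho1 : 'M[C]_n1) (rho2 : 'M[C]_n2).

Local Notation D := (#|{: Tn n1}| + #|{: Tn n2}|)%N.

Definition Ym n (Q : qmm C S G n) w := (Vw Q w)^T *m Vw Q w.

Lemma Ym_sym n (Q : qmm C S G n) w : (Ym Q w)^T = Ym Q w.
Proof. by rewrite /Ym trmx_mul trmxK. Qed.

Definition vecQ w : 'rV[C]_D := row_mx (enc (Ym Q1 w)) (enc (Ym Q2 w)).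

Definition fT (x : (S + G)%type) (v : 'rV[C]_D) : 'rV[C]_D :=
  row_mx (enc ((opmx Q1 x)^T *m dec (lsubmx v) *m opmx Q1 x))
         (enc ((opmx Q2 x)^T *m dec (rsubmx v) *m opmx Q2 x)).

Lemma fT_lin x : linear (fT x).
Proof.
move=> a u v; rewrite /fT !linearP !decD.
rewrite !mulmxDr !mulmxDl -!scalemxAr -!scalemxAl !encD.
by rewrite scale_row_mx add_row_mx.
Qed.

Definition Tx x := linmx (fT_lin x).

Lemma vecQ_cons x w : vecQ (x :: w) = vecQ w *m Tx x.
Proof.
rewrite /Tx linmxE /fT /vecQ row_mxKl row_mxKr !decK ?Ym_sym //.
by rewrite /Ym /= !trmx_mul !mulmxA.
Qed.

Lemma vecQ_vecw w : vecQ w = vecw Tx (vecQ [::]) w.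
Proof. by elim: w => [|x w IH] //=; rewrite vecQ_cons IH. Qed.

Definition fc (v : 'rV[C]_D) : 'rV[C]_1 :=
  (\tr (dec (lsubmx v) *m rho1) - \tr (dec (rsubmx v) *m rho2))%:M.

Lemma fc_lin : linear fc.
Proof.
move=> a u v; rewrite /fc !linearP !decD !mulmxDl -!scalemxAl !mxtraceD !mxtraceZ.
rewrite scale_scalar_mx -raddfD /=; congr (_%:M); ring.
Qed.

Definition cvec := linmx fc_lin.

Lemma vecQ_c w : (vecQ w *m cvec) 0 0 =
  \tr (Ym Q1 w *m rho1) - \tr (Ym Q2 w *m rho2).
Proof.
by rewrite /cvec linmxE /fc /vecQ row_mxKl row_mxKr !decK ?Ym_sym // mxE mulr1n.
Qed.

Lemma vecQ_c0 w : (vecQ w *m cvec = 0) <->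
  \tr (Ym Q1 w *m rho1) = \tr (Ym Q2 w *m rho2).
Proof.
split => [h|h].
  by apply/eqP; rewrite -subr_eq0 -vecQ_c h mxE.
apply/matrixP => i j; rewrite !ord1 vecQ_c h subrr mxE //.
Qed.
End Vec.

Theorem mainTheorem4 (C : numClosedFieldType) (S G : finType) (n1 n2 : nat)
    (Q1 : qmm C S G n1) (Q2 : qmm C S G n2)
    (rho1 : 'M[C]_n1) (rho2 : 'M[C]_n2) :
  is_real_qmm Q1 -> is_real_qmm Q2 ->
  is_density rho1 -> is_density rho2 ->
  let N' := ((n1 * n1.+1) %/ 2 + (n2 * n2.+1) %/ 2 - 1)%N in
  (qmm_equiv Q1 rho1 Q2 rho2 <-> qmm_equiv_m N' Q1 rho1 Q2 rho2) /\
  (forall k : nat,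
     qmm_equiv_k k Q1 rho1 Q2 rho2 <-> qmm_equiv_mk N' k Q1 rho1 Q2 rho2).
Proof.
move=> R1 R2 _ _ N'.
have key' : forall k, qmm_equiv_mk N' k Q1 rho1 Q2 rho2 -> qmm_equiv_k k Q1 rho1 Q2 rho2.
  move=> k H a sch b hs hb hk.
  set w := wop a 0 sch b.
  rewrite (Pr_Y rho1 R1 (Vop_wop Q1 a 0 sch b)) (Pr_Y rho2 R2 (Vop_wop Q2 a 0 sch b)).
  apply/(vecQ_c0 Q1 Q2 rho1 rho2); rewrite vecQ_vecw.
  apply: (@key _ _ _ _ (@isMx S G) _ k) => [w' hw' hc|]; last first.
    exact: leq_trans (count_wop _ _ _ _) hk.
  rewrite -vecQ_vecw; apply/(vecQ_c0 Q1 Q2 rho1 rho2).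
  have := split_props w'; have := split_V Q1 w'; have := split_V Q2 w'.
  case: (splitw w') => [[a' sch'] b'] e2 e1 [hs' hb' hc' hsz'].
  rewrite -(Pr_Y rho1 R1 (esym e1)) -(Pr_Y rho2 R2 (esym e2)).
  apply: H => //; apply/andP; split; first by rewrite hc'.
  rewrite hsz' /N' -!card_Tn; move: hw'; rewrite subn1 //.
split.
  split=> H; first by move=> a sch b hs hb _; apply: H.
  move=> a sch b hs hb _; apply: (key' (size sch)) => //.
  by move=> a' sch' b' hs' hb' /andP [_ h]; apply: H.
move=> k; split=> H; last exact: key'.
by move=> a sch b hs hb /andP [h _]; apply: H.
Qed.
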